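(* Fix an integer $M\ge2$ and constants $T_s,L_{s,d},L_{s,r},L_{r,d}>0$, $\delta\in(0,1]$, $\alpha\in(0,1)$. Put $g_{s,d}=\sin^2(\pi/M)T_sL_{s,d}$, $g_{r,d}=\sin^2(\pi/M)T_sL_{s,r}L_{r,d}$. For $\bar\gamma>0$ set $\bar\gamma_{s,r}=\bar\gamma_{s,d}=\bar\gamma_{r,d}=P_s/N_0=\bar\gamma$, $\bar\gamma^{ID}_{s,r}=T_sL_{s,r}\bar\gamma$, $$\epsilon=\frac{1}{2(1+\bar\gamma^{ID}_{s,r})}\ (M=2),\qquad \epsilon=1.03\sqrt{\tfrac{1+\cos\frac{\pi}{M}}{2\cos\frac{\pi}{M}}}\Big[1-\sqrt{\tfrac{(1-\cos\frac{\pi}{M})\bar\gamma^{ID}_{s,r}}{1+(1-\cos\frac{\pi}{M})\bar\gamma^{ID}_{s,r}}}\Big]\ (M>2),$$ and $\eta=\ln\frac{(1-\epsilon)(M-1)}{\epsilon}$. Define $$a_1=\frac{\sqrt\pi\,(2g_{s,d})^{-1/4}}{4\bar\gamma}\Big(\frac{g_{s,d}}2+\bar\gamma^{-1}\Big)^{-3/4},\quad b_1=\frac14+\frac{\sqrt{g_{s,d}/2+\bar\gamma^{-1}}}{2\sqrt{2g_{s,d}}},$$ $$a_2=\frac{2\bar\gamma}{\delta g_{r,d}(g_{s,d}\bar\gamma+2)\bar\gamma^2},\quad b_2=\frac{\delta g_{r,d}\bar\gamma^2}{2\bar\gamma},$$ $$Z_1=a_1\sqrt{2\eta}\,e^{-2b_1\eta},\quad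 Z_2=\frac{a_2(1-\alpha)}{2\alpha}\ln\Big(1+b_2\frac{2\alpha}{1-\alpha}\Big),\quad Z_3=e^{\eta}Z_1,$$ $$\mathcal P_C=(1-\epsilon)(Z_1+Z_2),\qquad \mathcal P_E=\frac{\epsilon Z_3}{M-1}+\frac{\epsilon}{g_{s,d}\bar\gamma+2}.$$ Then $$\lim_{\bar\gamma\to\infty}\frac{\ln(\mathcal P_C+\mathcal P_E)}{\ln\bar\gamma}=-2,$$ i.e. the diversity order is two.
   Context: $\mathcal P_C+\mathcal P_E$ is the paper's closed-form approximate average symbol error rate of its proposed detector in a three-node SWIPT-enabled differential decode-and-forward relay network with $M$-DPSK where the relay uses time switching with ratio $\alpha$ (relay transmit power $2\delta P_sL_{s,r}|h_{s,r}|^2\alpha/(1-\alpha)$), under Rayleigh fading with all average SNRs equal to $\bar\gamma$ and unit-mean channel gains. *)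

(* Defs.v *)
From Stdlib Require Import Reals.
From Coquelicot Require Import Coquelicot.
Open Scope R_scope.

(* Parameters: M (constellation size), Ts, Lsd, Lsr, Lrd, delta, alpha;
   g is the common average SNR \bar\gamma. *)

Definition g_sd (M : nat) (Ts Lsd : R) : R := (sin (PI / INR M))^2 * Ts * Lsd.
Definition g_rd (M : nat) (Ts Lsr Lrd : R) : R :=
  (sin (PI / INR M))^2 * Ts * Lsr * Lrd.

Definition gID (Ts Lsr g : R) : R := Ts * Lsr * g.

Definition eps (M : nat) (Ts Lsr g : R) : R :=
  if (M =? 2)%nat then / (2 * (1 + gID Ts Lsr g))
  else
    let c := cos (PI / INR M) in
    1.03 * sqrt ((1 + c) / (2 * c)) *
    (1 - sqrt ((1 - c) * gID Ts Lsr g / (1 + (1 - c) * gID Ts Lsr g))).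

Definition eta (M : nat) (Ts Lsr g : R) : R :=
  let e := eps M Ts Lsr g in ln ((1 - e) * (INR M - 1) / e).

Definition a1 (M : nat) (Ts Lsd g : R) : R :=
  let gs := g_sd M Ts Lsd in
  sqrt PI * Rpower (2 * gs) (- (1/4)) / (4 * g) * Rpower (gs / 2 + / g) (- (3/4)).

Definition b1 (M : nat) (Ts Lsd g : R) : R :=
  let gs := g_sd M Ts Lsd in
  1/4 + sqrt (gs / 2 + / g) / (2 * sqrt (2 * gs)).

Definition a2 (M : nat) (Ts Lsd Lsr Lrd delta g : R) : R :=
  2 * g / (delta * g_rd M Ts Lsr Lrd * (g_sd M Ts Lsd * g + 2) * g^2).

Definition b2 (M : nat) (Ts Lsr Lrd delta g : R) : R :=
  delta * g_rd M Ts Lsr Lrd * g^2 / (2 * g).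

Definition Z1 (M : nat) (Ts Lsd Lsr g : R) : R :=
  let et := eta M Ts Lsr g in
  a1 M Ts Lsd g * sqrt (2 * et) * exp (- 2 * b1 M Ts Lsd g * et).

Definition Z2 (M : nat) (Ts Lsd Lsr Lrd delta alpha g : R) : R :=
  a2 M Ts Lsd Lsr Lrd delta g * (1 - alpha) / (2 * alpha) *
  ln (1 + b2 M Ts Lsr Lrd delta g * (2 * alpha / (1 - alpha))).

Definition Z3 (M : nat) (Ts Lsd Lsr g : R) : R :=
  exp (eta M Ts Lsr g) * Z1 M Ts Lsd Lsr g.

Definition P_C (M : nat) (Ts Lsd Lsr Lrd delta alpha g : R) : R :=
  (1 - eps M Ts Lsr g) *
  (Z1 M Ts Lsd Lsr g + Z2 M Ts Lsd Lsr Lrd delta alpha g).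

Definition P_E (M : nat) (Ts Lsd Lsr g : R) : R :=
  eps M Ts Lsr g * Z3 M Ts Lsd Lsr g / (INR M - 1) +
  eps M Ts Lsr g / (g_sd M Ts Lsd * g + 2).

Definition SER (M : nat) (Ts Lsd Lsr Lrd delta alpha g : R) : R :=
  P_C M Ts Lsd Lsr Lrd delta alpha g + P_E M Ts Lsd Lsr g.

(* Main.v *)
Require Import Defs.
From Stdlib Require Import Reals Lra Lia.
From Coquelicot Require Import Coquelicot.
Open Scope R_scope.

Lemma exp_mono x y : x <= y -> exp x <= exp y.
Proof. intros [H|H]. left; apply exp_increasing; auto. subst; lra. Qed.

Lemma INR_M_ge2 M : (2 <= M)%nat -> 2 <= INR M.
Proof. intros H. apply le_INR in H. simpl in H. lra. Qed.

Lemma sin_pos M : (2 <= M)%nat -> 0 < sin (PI / INR M).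
Proof.
  intros H. pose proof (INR_M_ge2 M H). pose proof PI_RGT_0.
  apply sin_gt_0.
  - apply Rdiv_lt_0_compat; lra.
  - apply (Rmult_lt_reg_r (INR M)). lra. unfold Rdiv. rewrite Rmult_assoc, Rinv_l by lra. nra.
Qed.

Lemma eps_bounds0 M Ts Lsr : (2 <= M)%nat -> 0 < Ts -> 0 < Lsr ->
  exists k1 k2 b, 0 < k1 /\ 0 < k2 /\ 0 < b /\
   forall g, 0 < g -> k1 / (1 + b * g) <= eps M Ts Lsr g <= k2 / (1 + b * g).
Proof.
  intros HM HT HL. unfold eps.
  destruct (Nat.eqb_spec M 2) as [E|E].
  - exists (1/2), (1/2), (Ts * Lsr). split; [lra|split;[lra|split;[nra|]]].
    intros g Hg. unfold gID.
    assert (0 < Ts * Lsr * g) by (apply Rmult_lt_0_compat; nra).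
    replace (/ (2 * (1 + Ts * Lsr * g))) with (1/2 / (1 + Ts*Lsr*g)) by (field; lra).
    lra.
  - assert (H3 : 3 <= INR M).
    { assert (3 <= M)%nat by lia. apply le_INR in H. simpl in H. lra. }
    pose proof PI_RGT_0 as HPI.
    set (x := PI / INR M).
    assert (Hx0 : 0 < x) by (apply Rdiv_lt_0_compat; lra).
    assert (Hx1 : x < PI / 2).
    { unfold x. apply (Rmult_lt_reg_r (INR M)). lra. unfold Rdiv.
      rewrite Rmult_assoc, Rinv_l by lra. nra. }
    assert (Hc0 : 0 < cos x) by (apply cos_gt_0; lra).
    assert (Hc1 : cos x < 1).
    { replace x with (2 * (x/2)) by field. rewrite cos_2a_sin.
      assert (0 < sin (x/2)) by (apply sin_gt_0; lra). pose proof (Rmult_lt_0_compat _ _ H H). lra. }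
    set (c := cos x) in *.
    set (s := sqrt ((1 + c) / (2 * c))).
    assert (Hs : 0 < s). { apply sqrt_lt_R0. apply Rdiv_lt_0_compat. lra. lra. }
    assert (H103 : 0 < 1.03) by lra.
    exists (1.03 * s / 2), (1.03 * s), ((1 - c) * (Ts * Lsr)).
    split; [apply Rdiv_lt_0_compat; nra|split;[nra|split;[apply Rmult_lt_0_compat; nra|]]].
    intros g Hg. unfold gID.
    set (y := (1 - c) * (Ts * Lsr * g)).
    assert (Hy : 0 < y) by (unfold y; apply Rmult_lt_0_compat; [lra| apply Rmult_lt_0_compat; nra]).
    replace ((1 - c) * (Ts * Lsr) * g) with y by (unfold y; ring).
    replace ((1 - c) * Ts * Lsr * g) with y by (unfold y; ring).
    set (q := sqrt (y / (1 + y))).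
    assert (Hq0 : 0 <= q) by apply sqrt_pos.
    assert (Hq2 : q ^ 2 = y / (1 + y)) by (apply pow2_sqrt; apply Rlt_le, Rdiv_lt_0_compat; lra).
    set (r := / (1 + y)).
    assert (Hr : 0 < r) by (apply Rinv_0_lt_compat; lra).
    assert (Hqr : (1 - q) * (1 + q) = r).
    { unfold r. replace ((1-q)*(1+q)) with (1 - q^2) by ring. rewrite Hq2. field. lra. }
    assert (Hq1 : q <= 1) by nra.
    assert (Hl1 : r / 2 <= 1 - q) by nra.
    assert (Hl2 : 1 - q <= r) by nra.
    replace (1.03 * s / 2 / (1 + y)) with (1.03 * s * (r / 2)) by (unfold r; field; lra).
    replace (1.03 * s / (1 + y)) with (1.03 * s * r) by (unfold r; field; lra).
    split; apply Rmult_le_compat_l; nra.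
Qed.

Lemma eps_bounds M Ts Lsr : (2 <= M)%nat -> 0 < Ts -> 0 < Lsr ->
  exists K1 K2, 0 < K1 /\ 0 < K2 /\
   forall g, 1 <= g -> K1 / g <= eps M Ts Lsr g <= K2 / g.
Proof.
  intros HM HT HL. destruct (eps_bounds0 M Ts Lsr HM HT HL) as (k1 & k2 & b & Hk1 & Hk2 & Hb & H).
  exists (k1 / (1 + b)), (k2 / b). split; [apply Rdiv_lt_0_compat; lra|split;[apply Rdiv_lt_0_compat; lra|]].
  intros g Hg. destruct (H g ltac:(lra)) as [H1 H2]. split.
  - eapply Rle_trans; [|exact H1].
    replace (k1 / (1 + b) / g) with (k1 / ((1+b)*g)) by (field; lra).
    unfold Rdiv. apply Rmult_le_compat_l; [lra|]. apply Rinv_le_contravar; nra.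
  - eapply Rle_trans; [exact H2|].
    replace (k2 / b / g) with (k2 / (b*g)) by (field; lra).
    unfold Rdiv. apply Rmult_le_compat_l; [lra|]. apply Rinv_le_contravar; nra.
Qed.
Lemma Rpower_pos x y : 0 < Rpower x y.
Proof. unfold Rpower; apply exp_pos. Qed.

Lemma a1_bound M Ts Lsd g : 0 < g_sd M Ts Lsd -> 0 < g ->
  0 <= a1 M Ts Lsd g <=
  (sqrt PI * Rpower (2 * g_sd M Ts Lsd) (- (1/4)) / 4 * Rpower (g_sd M Ts Lsd / 2) (- (3/4))) / g.
Proof.
  intros Hgs Hg. unfold a1. cbv zeta.
  set (gs := g_sd M Ts Lsd) in *.
  set (P := sqrt PI * Rpower (2 * gs) (- (1/4))).
  assert (HP : 0 <= P) by (unfold P; apply Rmult_le_pos; [apply sqrt_pos| apply Rlt_le, Rpower_pos]).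
  assert (HR : Rpower (gs / 2 + / g) (- (3 / 4)) <= Rpower (gs / 2) (- (3 / 4))).
  { unfold Rpower. apply exp_mono.
    assert (ln (gs/2) <= ln (gs/2 + / g)).
    { apply ln_le. lra. assert (0 < / g) by (apply Rinv_0_lt_compat; lra). lra. }
    lra. }
  assert (H1 : 0 <= P / (4 * g)) by (apply Rmult_le_pos; [lra| apply Rlt_le, Rinv_0_lt_compat; lra]).
  split.
  - apply Rmult_le_pos; [lra| apply Rlt_le, Rpower_pos].
  - replace (P / 4 * Rpower (gs / 2) (- (3 / 4)) / g) with (P / (4 * g) * Rpower (gs / 2) (- (3 / 4))) by (field; lra).
    apply Rmult_le_compat_l; lra.
Qed.

Lemma b1_ge M Ts Lsd g : 0 < g_sd M Ts Lsd -> 0 < g -> 1/2 <= b1 M Ts Lsd g.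
Proof.
  intros Hgs Hg. unfold b1. cbv zeta.
  set (gs := g_sd M Ts Lsd) in *.
  set (u := sqrt (gs / 2)).
  assert (Hu : 0 < u) by (apply sqrt_lt_R0; lra).
  assert (Hv : sqrt (2 * gs) = 2 * u).
  { unfold u. replace (2 * gs) with (Rsqr 2 * (gs / 2)) by (unfold Rsqr; field).
    rewrite sqrt_mult by (unfold Rsqr; lra). rewrite sqrt_Rsqr by lra. reflexivity. }
  rewrite Hv.
  assert (Hw : u <= sqrt (gs / 2 + / g)).
  { apply sqrt_le_1_alt. assert (0 < / g) by (apply Rinv_0_lt_compat; lra). lra. }
  assert (u / (2 * (2 * u)) <= sqrt (gs / 2 + / g) / (2 * (2 * u))).
  { unfold Rdiv. apply Rmult_le_compat_r; [apply Rlt_le, Rinv_0_lt_compat; lra| exact Hw]. }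
  replace (u / (2 * (2 * u))) with (1/4) in H by (field; lra).
  lra.
Qed.

Lemma Z1_eq M Ts Lsd Lsr g : Z1 M Ts Lsd Lsr g =
  a1 M Ts Lsd g * sqrt (2 * eta M Ts Lsr g) * exp (- 2 * b1 M Ts Lsd g * eta M Ts Lsr g).
Proof. reflexivity. Qed.

Lemma eta_eq M Ts Lsr g : eta M Ts Lsr g =
  ln ((1 - eps M Ts Lsr g) * (INR M - 1) / eps M Ts Lsr g).
Proof. reflexivity. Qed.

Lemma SER_bounds M Ts Lsd Lsr Lrd delta alpha :
  (2 <= M)%nat ->
  0 < Ts -> 0 < Lsd -> 0 < Lsr -> 0 < Lrd ->
  0 < delta <= 1 -> 0 < alpha < 1 ->
  exists k C g0, 0 < k /\ 0 < C /\ forall g, g0 < g ->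
    1 <= ln g /\ k / g^2 <= SER M Ts Lsd Lsr Lrd delta alpha g <= C * ln g / g^2.
Proof.
  intros HM HT HLsd HLsr HLrd Hd Ha.
  pose proof (sin_pos M HM) as Hsin.
  assert (Hgs : 0 < g_sd M Ts Lsd).
  { unfold g_sd. pose proof (pow_lt _ 2 Hsin). repeat apply Rmult_lt_0_compat; lra. }
  assert (Hgr : 0 < g_rd M Ts Lsr Lrd).
  { unfold g_rd. pose proof (pow_lt _ 2 Hsin). repeat apply Rmult_lt_0_compat; lra. }
  destruct (eps_bounds M Ts Lsr HM HT HLsr) as (K1 & K2 & HK1 & HK2 & HE).
  pose proof (INR_M_ge2 M HM) as HM2.
  set (gs := g_sd M Ts Lsd) in *.
  set (gr := g_rd M Ts Lsr Lrd) in *.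
  set (m := INR M - 1).
  assert (Hm : 1 <= m) by (unfold m; lra).
  set (A := sqrt PI * Rpower (2 * gs) (- (1/4)) / 4 * Rpower (gs / 2) (- (3/4))).
  assert (HA : 0 <= A).
  { unfold A. apply Rmult_le_pos; [|apply Rlt_le, Rpower_pos].
    apply Rmult_le_pos; [|lra]. apply Rmult_le_pos; [apply sqrt_pos|apply Rlt_le, Rpower_pos]. }
  set (B0 := Rabs (ln (m / K1))).
  assert (HB0 : 0 <= B0) by apply Rabs_pos.
  set (d := delta * gr * alpha / (1 - alpha)).
  assert (Hdd : 0 < d) by (unfold d; apply Rdiv_lt_0_compat; [repeat apply Rmult_lt_0_compat|]; lra).
  assert (Hld : 0 <= ln (1 + d)) by (rewrite <- ln_1; apply ln_le; lra).
  set (C1 := 2 * A * K2 * (2 + B0)).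
  set (C2 := 2 / (delta * gr * gs) * ((1 - alpha) / (2 * alpha)) * (1 + ln (1 + d))).
  set (C3 := K2 * A * (2 + B0)).
  set (C4 := K2 / gs).
  assert (HC1 : 0 <= C1) by (unfold C1; apply Rmult_le_pos; [apply Rmult_le_pos; [apply Rmult_le_pos|]|]; lra).
  assert (HC3 : 0 <= C3) by (unfold C3; apply Rmult_le_pos; [apply Rmult_le_pos|]; lra).
  assert (HC4 : 0 < C4) by (unfold C4; apply Rdiv_lt_0_compat; lra).
  assert (HC2 : 0 <= C2).
  { unfold C2. apply Rmult_le_pos; [|lra]. apply Rmult_le_pos.
    - apply Rlt_le, Rdiv_lt_0_compat; [lra| repeat apply Rmult_lt_0_compat; lra].
    - apply Rlt_le, Rdiv_lt_0_compat; lra. }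
  exists (K1 / (gs + 2)), (C1 + C2 + C3 + C4), (Rmax (exp 1) (2 * K2)).
  split; [apply Rdiv_lt_0_compat; lra|]. split; [lra|].
  intros g Hg.
  assert (He1 : 1 < exp 1) by (pose proof (exp_increasing 0 1 ltac:(lra)) as Hx; rewrite exp_0 in Hx; lra).
  assert (Hge : exp 1 < g) by (eapply Rle_lt_trans; [apply Rmax_l| exact Hg]).
  assert (HgK : 2 * K2 < g) by (eapply Rle_lt_trans; [apply Rmax_r| exact Hg]).
  assert (Hg1 : 1 <= g) by lra.
  assert (HL1 : 1 <= ln g) by (rewrite <- (ln_exp 1); apply ln_le; lra).
  split; [exact HL1|].
  set (L := ln g) in *.
  assert (Hig : 0 < / g) by (apply Rinv_0_lt_compat; lra).
  destruct (HE g Hg1) as [HEl HEu].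
  set (E := eps M Ts Lsr g) in *.
  assert (HEl' : K1 <= E * g).
  { replace K1 with (K1 / g * g) by (field; lra). apply Rmult_le_compat_r; lra. }
  assert (HEu' : E * g <= K2).
  { replace K2 with (K2 / g * g) by (field; lra). apply Rmult_le_compat_r; lra. }
  assert (HE0 : 0 < E) by nra.
  assert (HE2 : E <= 1/2) by nra.
  set (et := eta M Ts Lsr g).
  set (X := (1 - E) * m / E).
  assert (Het : et = ln X) by (unfold et, X; rewrite eta_eq; reflexivity).
  assert (HXE : X * E = (1 - E) * m) by (unfold X; field; lra).
  assert (HX0 : 0 < X) by (unfold X; apply Rdiv_lt_0_compat; nra).
  assert (HX1 : 1 <= X) by nra.
  assert (Het0 : 0 <= et) by (rewrite Het, <- ln_1; apply ln_le; lra).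
  assert (HexpE : exp et = X) by (rewrite Het; apply exp_ln; lra).
  assert (Hexpm : exp (- et) <= 2 * E).
  { rewrite exp_Ropp, HexpE. apply (Rmult_le_reg_r X); [lra|].
    rewrite Rinv_l by lra. nra. }
  assert (HXu : X <= m / K1 * g).
  { assert (X * K1 <= m * g).
    { apply Rle_trans with (X * (E * g)). apply Rmult_le_compat_l; lra. nra. }
    replace (m / K1 * g) with (m * g / K1) by (field; lra).
    apply (Rmult_le_reg_r K1); [lra|]. replace (m * g / K1 * K1) with (m * g) by (field; lra). lra. }
  assert (Hetu : et <= ln (m / K1) + L).
  { rewrite Het. unfold L. rewrite <- ln_mult by (try apply Rdiv_lt_0_compat; lra).
    apply ln_le; lra. }
  assert (HW : 1 + et <= (2 + B0) * L).
  { pose proof (Rle_abs (ln (m / K1))). fold B0 in H. nra. }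
  destruct (a1_bound M Ts Lsd g Hgs ltac:(lra)) as [Ha0 Ha1].
  fold gs in Ha0, Ha1. fold A in Ha1.
  pose proof (b1_ge M Ts Lsd g Hgs ltac:(lra)) as Hb.
  set (a := a1 M Ts Lsd g) in *.
  set (b := b1 M Ts Lsd g) in *.
  set (S := sqrt (2 * et)).
  assert (HS0 : 0 <= S) by apply sqrt_pos.
  assert (HS2 : S ^ 2 = 2 * et) by (apply pow2_sqrt; lra).
  assert (HS : S <= 1 + et) by nra.
  assert (HaS : 0 <= a * S) by nra.
  assert (Hexpb : exp (- 2 * b * et) <= exp (- et)) by (apply exp_mono; nra).
  assert (HZ1eq : Z1 M Ts Lsd Lsr g = a * S * exp (- 2 * b * et)) by (rewrite Z1_eq; reflexivity).
  assert (HZ10 : 0 <= Z1 M Ts Lsd Lsr g).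
  { rewrite HZ1eq. apply Rmult_le_pos; [lra| apply Rlt_le, exp_pos]. }
  assert (HZ1 : Z1 M Ts Lsd Lsr g <= C1 * L / g ^ 2).
  { rewrite HZ1eq.
    apply Rle_trans with (a * S * (2 * E)). apply Rmult_le_compat_l; lra.
    apply Rle_trans with (A / g * ((2 + B0) * L) * (2 * (K2 / g))).
    apply Rmult_le_compat; [nra|lra| |lra]. apply Rmult_le_compat; lra.
    unfold C1. right. field. lra. }
  assert (HZ3eq : Z3 M Ts Lsd Lsr g = a * S * exp (et + - 2 * b * et)).
  { unfold Z3. fold et. rewrite HZ1eq, exp_plus. ring. }
  assert (HZ30 : 0 <= Z3 M Ts Lsd Lsr g).
  { rewrite HZ3eq. apply Rmult_le_pos; [lra| apply Rlt_le, exp_pos]. }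
  assert (HZ3 : Z3 M Ts Lsd Lsr g <= A / g * ((2 + B0) * L)).
  { rewrite HZ3eq. apply Rle_trans with (a * S * 1).
    apply Rmult_le_compat_l; [lra|]. rewrite <- exp_0. apply exp_mono. nra.
    rewrite Rmult_1_r. apply Rmult_le_compat; lra. }
  assert (HPE1 : E * Z3 M Ts Lsd Lsr g / (INR M - 1) <= C3 * L / g ^ 2).
  { fold m. apply Rle_trans with (E * Z3 M Ts Lsd Lsr g).
    { unfold Rdiv. rewrite <- (Rmult_1_r (E * Z3 M Ts Lsd Lsr g)) at 2.
      apply Rmult_le_compat_l; [nra|]. rewrite <- Rinv_1. apply Rinv_le_contravar; lra. }
    apply Rle_trans with (K2 / g * (A / g * ((2 + B0) * L))).
    apply Rmult_le_compat; lra.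
    unfold C3. right. field. lra. }
  assert (HPE10 : 0 <= E * Z3 M Ts Lsd Lsr g / (INR M - 1)).
  { fold m. apply Rmult_le_pos; [nra| apply Rlt_le, Rinv_0_lt_compat; lra]. }
  assert (Ha2eq : a2 M Ts Lsd Lsr Lrd delta g = 2 / (delta * gr * (gs * g + 2) * g)).
  { unfold a2. fold gs gr. field. repeat split; try lra; nra. }
  assert (Hb2eq : b2 M Ts Lsr Lrd delta g * (2 * alpha / (1 - alpha)) = d * g).
  { unfold b2, d. fold gr. field. lra. }
  assert (Ha20 : 0 <= a2 M Ts Lsd Lsr Lrd delta g).
  { rewrite Ha2eq. apply Rlt_le, Rdiv_lt_0_compat; [lra|]. repeat apply Rmult_lt_0_compat; nra. }
  assert (Ha2 : a2 M Ts Lsd Lsr Lrd delta g <= 2 / (delta * gr * gs) / g ^ 2).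
  { rewrite Ha2eq. replace (2 / (delta * gr * gs) / g ^ 2) with (2 / (delta * gr * gs * g ^ 2)) by (field; repeat split; lra).
    assert (Hdg : 0 < delta * gr) by (apply Rmult_lt_0_compat; lra).
    assert (Hg2 : 0 < g ^ 2) by (apply pow_lt; lra).
    unfold Rdiv. apply Rmult_le_compat_l; [lra|]. apply Rinv_le_contravar.
    apply Rmult_lt_0_compat; [apply Rmult_lt_0_compat|]; lra.
    replace (delta * gr * gs * g ^ 2) with ((delta * gr) * (gs * g * g)) by ring.
    replace (delta * gr * (gs * g + 2) * g) with ((delta * gr) * (gs * g * g + 2 * g)) by ring.
    apply Rmult_le_compat_l; lra. }
  assert (Hln0 : 0 <= ln (1 + d * g)) by (rewrite <- ln_1; apply ln_le; nra).
  assert (Hlnu : ln (1 + d * g) <= (1 + ln (1 + d)) * L).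
  { apply Rle_trans with (ln ((1 + d) * g)). apply ln_le; nra.
    rewrite ln_mult by lra. fold L. nra. }
  assert (Hal : 0 < (1 - alpha) / (2 * alpha)) by (apply Rdiv_lt_0_compat; lra).
  assert (HZ2eq : Z2 M Ts Lsd Lsr Lrd delta alpha g =
     a2 M Ts Lsd Lsr Lrd delta g * ((1 - alpha) / (2 * alpha)) * ln (1 + d * g)).
  { unfold Z2. rewrite Hb2eq. field. lra. }
  assert (HZ20 : 0 <= Z2 M Ts Lsd Lsr Lrd delta alpha g).
  { rewrite HZ2eq. apply Rmult_le_pos; [|lra]. apply Rmult_le_pos; lra. }
  assert (HZ2 : Z2 M Ts Lsd Lsr Lrd delta alpha g <= C2 * L / g ^ 2).
  { rewrite HZ2eq.
    apply Rle_trans with (2 / (delta * gr * gs) / g ^ 2 * ((1 - alpha) / (2 * alpha)) * ((1 + ln (1 + d)) * L)).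
    apply Rmult_le_compat; [|lra| |lra]. apply Rmult_le_pos; lra.
    apply Rmult_le_compat_r; lra.
    unfold C2. right. field. repeat split; lra. }
  assert (HPE2 : E / (gs * g + 2) <= C4 * L / g ^ 2).
  { apply Rle_trans with (K2 / g * / (gs * g)).
    unfold Rdiv at 1. apply Rmult_le_compat; try lra.
    apply Rlt_le, Rinv_0_lt_compat; nra. apply Rinv_le_contravar; nra.
    apply Rle_trans with (C4 / g ^ 2 * 1).
    unfold C4. right. field. lra.
    replace (C4 * L / g ^ 2) with (C4 / g ^ 2 * L) by (field; lra).
    apply Rmult_le_compat_l; [|lra]. apply Rlt_le, Rdiv_lt_0_compat; [lra| apply pow_lt; lra]. }
  assert (HPE20 : 0 <= E / (gs * g + 2)) by (apply Rlt_le, Rdiv_lt_0_compat; nra).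
  unfold SER, P_C, P_E. fold E gs.
  split.
  - apply Rle_trans with (E / (gs * g + 2)); [|nra].
    apply Rle_trans with (K1 / g * / ((gs + 2) * g)).
    right. field. lra.
    unfold Rdiv at 2. apply Rmult_le_compat.
    apply Rlt_le, Rdiv_lt_0_compat; lra.
    apply Rlt_le, Rinv_0_lt_compat; nra. lra. apply Rinv_le_contravar; nra.
  - replace ((C1 + C2 + C3 + C4) * L / g ^ 2) with
      (C1 * L / g ^ 2 + C2 * L / g ^ 2 + C3 * L / g ^ 2 + C4 * L / g ^ 2) by (field; lra).
    assert ((1 - E) * (Z1 M Ts Lsd Lsr g + Z2 M Ts Lsd Lsr Lrd delta alpha g)
            <= Z1 M Ts Lsd Lsr g + Z2 M Ts Lsd Lsr Lrd delta alpha g) by nra.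
    lra.
Qed.
Lemma lim_inv_ln (c : R) : is_lim (fun g => c / ln g) p_infty 0.
Proof.
  pose proof (is_lim_scal_l _ c _ _ (is_lim_inv _ _ _ is_lim_ln_p ltac:(discriminate))) as H.
  simpl in H. replace 0 with (c * 0) by ring. exact H.
Qed.

Lemma lim_lnln : is_lim (fun g => ln (ln g) / ln g) p_infty 0.
Proof.
  apply (is_lim_comp (fun y => ln y / y) ln p_infty 0 p_infty).
  - exact is_lim_div_ln_p.
  - exact is_lim_ln_p.
  - exists 0. intros; discriminate.
Qed.

Lemma lim_low (c : R) : is_lim (fun g => -2 + c / ln g) p_infty (-2).
Proof.
  pose proof (is_lim_plus' _ _ _ _ _ (is_lim_const (-2) p_infty) (lim_inv_ln c)) as H.
  rewrite Rplus_0_r in H. exact H.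
Qed.

Lemma lim_up (c : R) : is_lim (fun g => -2 + c / ln g + ln (ln g) / ln g) p_infty (-2).
Proof.
  pose proof (is_lim_plus' _ _ _ _ _ (lim_low c) lim_lnln) as H.
  rewrite Rplus_0_r in H. exact H.
Qed.

Theorem mainTheorem4 (M : nat) (Ts Lsd Lsr Lrd delta alpha : R) :
  (2 <= M)%nat ->
  0 < Ts -> 0 < Lsd -> 0 < Lsr -> 0 < Lrd ->
  0 < delta <= 1 -> 0 < alpha < 1 ->
  is_lim (fun g => ln (SER M Ts Lsd Lsr Lrd delta alpha g) / ln g)
    p_infty (-2).
Proof.
  intros HM HT HLsd HLsr HLrd Hd Ha.
  destruct (SER_bounds M Ts Lsd Lsr Lrd delta alpha HM HT HLsd HLsr HLrd Hd Ha)
    as (k & C & g0 & Hk & HC & HB).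
  apply (is_lim_le_le_loc (fun g => -2 + ln k / ln g)
           (fun g => -2 + ln C / ln g + ln (ln g) / ln g)); [| apply lim_low | apply lim_up].
  exists (Rmax g0 1). intros g Hg.
  assert (Hg0 : g0 < g) by (eapply Rle_lt_trans; [apply Rmax_l| exact Hg]).
  assert (Hg1 : 1 < g) by (eapply Rle_lt_trans; [apply Rmax_r| exact Hg]).
  destruct (HB g Hg0) as (HL & Hlo & Hup).
  set (L := ln g) in *.
  set (s := SER M Ts Lsd Lsr Lrd delta alpha g) in *.
  assert (Hg2 : 0 < g ^ 2) by (apply pow_lt; lra).
  assert (Hkg : 0 < k / g ^ 2) by (apply Rdiv_lt_0_compat; lra).
  assert (Hlng2 : ln (g ^ 2) = 2 * L) by (unfold L; rewrite ln_pow by lra; simpl; ring).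
  assert (Hs : 0 < s) by lra.
  assert (H1 : ln k - 2 * L <= ln s).
  { apply Rle_trans with (ln (k / g ^ 2)).
    - unfold Rdiv. rewrite ln_mult, ln_Rinv, Hlng2 by (try apply Rinv_0_lt_compat; lra). lra.
    - apply ln_le; lra. }
  assert (H2 : ln s <= ln C + ln L - 2 * L).
  { apply Rle_trans with (ln (C * L / g ^ 2)).
    - apply ln_le; lra.
    - unfold Rdiv. rewrite ln_mult, ln_mult, ln_Rinv, Hlng2 by (try apply Rinv_0_lt_compat; try apply Rmult_lt_0_compat; lra). lra. }
  assert (HiL : 0 <= / L) by (apply Rlt_le, Rinv_0_lt_compat; lra).
  split.
  - replace (-2 + ln k / L) with ((ln k - 2 * L) * / L) by (field; lra).
    unfold Rdiv. apply Rmult_le_compat_r; lra.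
  - replace (-2 + ln C / L + ln L / L) with ((ln C + ln L - 2 * L) * / L) by (field; lra).
    unfold Rdiv. apply Rmult_le_compat_r; lra.
Qed.
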